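(* Let $C\subseteq\mathbb{F}_2^n$ be a binary linear $[n,k,d]$ code with $\mathbf{1}_n\in C$, whose dual $C^\perp$ has minimum distance $d^\perp$, let $t$ be a positive integer with $$d^\perp-t=\#\{u \mid C_u\neq\emptyset,\ 0<u\le n-t\}=3,$$ and suppose the nonzero weights of $C$ are exactly $d,\ n/2,\ n-d,\ n$ (with $n$ even). (1) If $d^\perp\ge 4$ and $\dim C=k$ (with $2\le k\le n-1$), then $\dfrac{n(2^{k-1}-n)}{(n-2d)^2}$ is a positive integer. (2) If $d^\perp\ge 6$, then $\dfrac{-n^2(n-1)(n-2)}{(n-2d)^2\left(n^2-(4d+3)n+4d^2+2\right)}$ is a positive integer. (3) If $d^\perp\ge 8$, then $n=(m^2+8)/3$ for some $m\in\mathbb{Z}$, and $$\frac{n^2(n^2-3n+2)}{6(3n-8)}=\frac{(m^2+2)(m^2+5)(m^2+8)^2}{486\,m^2}\quad\text{and}\quad \frac{2(n^4-7n^3+23n^2-41n+24)}{3(3n-8)}$$ are positive integers.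
   Context: $\mathbf{1}_n$ is the all-ones vector; $C^\perp$ is the dual code with respect to the standard inner product and $d^\perp$ its minimum nonzero weight; $C_u=\{c\in C:\mathrm{wt}(c)=u\}$ (Hamming weight). The paper notes that in the case $d^\perp-t=3$ the weight distribution of $C$ is supported on $0,d,n/2,n-d,n$ with $n$ even, and works under this assumption throughout. *)

(* Defs.v *)
From HB Require Import structures.
From mathcomp Require Import all_boot all_order all_algebra.
Set Implicit Arguments. Unset Strict Implicit. Unset Printing Implicit Defensive.
Import Order.TTheory GRing.Theory Num.Theory.
Local Open Scope ring_scope.

Definition wt (n : nat) (x : 'rV['F_2]_n) : nat := #|[set i : 'I_n | x 0 i != 0]|.

Definition dotF2 (n : nat) (x y : 'rV['F_2]_n) : 'F_2 := \sum_(i < n) x 0 i * y 0 i.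

Definition dual_code (n : nat) (C : {vspace 'rV['F_2]_n}) : {set 'rV['F_2]_n} :=
  [set x : 'rV['F_2]_n | [forall c : 'rV['F_2]_n, (c \in C) ==> (dotF2 x c == 0)]].

Definition has_weight (n : nat) (C : {vspace 'rV['F_2]_n}) (u : nat) : bool :=
  [exists c : 'rV['F_2]_n, (c \in C) && (wt c == u)].

Definition min_dist (n : nat) (C : {vspace 'rV['F_2]_n}) (d : nat) : Prop :=
  (exists2 c, (c \in C) && (c != 0) & wt c = d) /\
  (forall c, c \in C -> c != 0 -> (d <= wt c)%N).

Definition dual_min_dist (n : nat) (C : {vspace 'rV['F_2]_n}) (dp : nat) : Prop :=
  (exists2 x, (x \in dual_code C) && (x != 0) & wt x = dp) /\
  (forall x, x \in dual_code C -> x != 0 -> (dp <= wt x)%N).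

Definition num_low_weights (n : nat) (C : {vspace 'rV['F_2]_n}) (t : nat) : nat :=
  #|[set u : 'I_n.+1 | (0 < (u : nat))%N && ((u : nat) <= n - t)%N && has_weight C u]|.

Definition ones (n : nat) : 'rV['F_2]_n := const_mx 1.

Definition is_posint (q : rat) : Prop := exists p : nat, (0 < p)%N /\ q = p%:R.

(* Main.v *)
Require Import Defs.
From HB Require Import structures.
From mathcomp Require Import all_boot all_order all_algebra.
From mathcomp Require Import finfield.
From mathcomp Require Import ring lra zify.
Import Order.TTheory GRing.Theory Num.Theory.
Local Open Scope ring_scope.

Module Aux.
Set Implicit Arguments. Unset Strict Implicit. Unset Printing Implicit Defensive.

Definition sg2 (a : 'F_2) : rat := if a == 0 then 1 else -1.

Lemma F2_cases (a : 'F_2) : a = 0 \/ a = 1.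
Proof. case: a => [[|[|k]] Hk]; [left|right|]; try by apply: val_inj. by []. Qed.

Lemma sg2D a b : sg2 (a + b) = sg2 a * sg2 b.
Proof. by case: (F2_cases a) => ->; case: (F2_cases b) => ->; rewrite /sg2 //=; ring. Qed.

Lemma sg2_0 : sg2 0 = 1. Proof. by []. Qed.
Lemma sg2_sq a : sg2 a ^+ 2 = 1.
Proof. by case: (F2_cases a) => ->; rewrite /sg2 /=; ring. Qed.
Lemma sg2_1 a : sg2 (a + 1) = - sg2 a.
Proof. by rewrite sg2D /sg2 /=; ring. Qed.
Lemma sg2E a : sg2 a = 1 - 2%:R * (a != 0)%:R.
Proof. by case: (F2_cases a) => ->; rewrite /sg2 /=; ring. Qed.
Lemma F2_addxx (a : 'F_2) : a + a = 0.
Proof. case: (F2_cases a) => ->; first by rewrite addr0. by apply: val_inj. Qed.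
Lemma rv_addxx n (x : 'rV['F_2]_n) : x + x = 0.
Proof. by apply/rowP => i; rewrite !mxE F2_addxx. Qed.

Section Fixn.
Variable n : nat.
Implicit Types x c v : 'rV['F_2]_n.

Definition Sv x : rat := \sum_(i < n) sg2 (x 0 i).

Lemma wtE x : wt x = (\sum_(i < n) (x ord0 i != 0%R))%N.
Proof.
rewrite /wt -sum1_card big_mkcond /=; apply: eq_bigr => i _.
by rewrite inE; case: (x 0 i != 0).
Qed.

Lemma wt_le x : (wt x <= n)%N.
Proof. by rewrite /wt; apply: leq_trans (max_card _) _; rewrite card_ord. Qed.

Lemma S_wt x : Sv x = n%:R - 2%:R * (wt x)%:R.
Proof.
rewrite /Sv wtE natr_sum mulr_sumr -[in n%:R](card_ord n) -sumr_const -sumrB.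
by apply: eq_bigr => i _; rewrite sg2E.
Qed.


Definition dualS (P : {set 'rV['F_2]_n}) : {set 'rV['F_2]_n} :=
  [set x | [forall c, (c \in P) ==> (dotF2 x c == 0)]].

Lemma dotF2D x c c' : dotF2 x (c + c') = dotF2 x c + dotF2 x c'.
Proof. by rewrite /dotF2 -big_split; apply: eq_bigr => i _; rewrite mxE mulrDr. Qed.

Lemma char_sum (P : {set 'rV['F_2]_n})
  (closed : forall c c', c \in P -> c' \in P -> c + c' \in P) v :
  \sum_(c in P) sg2 (dotF2 v c) = if v \in dualS P then (#|P|)%:R else 0.
Proof.
case: ifP => Hv.
  rewrite -sumr_const; apply: eq_bigr => c Hc.
  by move: Hv; rewrite inE => /forallP /(_ c) /implyP /(_ Hc) /eqP ->.
move: Hv; rewrite inE => /negbT /forallPn [c0]; rewrite negb_imply => /andP [Hc0 Hd].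
have H1 : dotF2 v c0 = 1 by case: (F2_cases (dotF2 v c0)) Hd => -> //; rewrite eqxx.
set s := \sum_(c in P) _.
have : s = - s.
  rewrite {1}/s (reindex_inj (addIr c0)) /=.
  rewrite (eq_bigl (fun c => c \in P)); last first.
    move=> c /=; apply/idP/idP => Hc; last exact: closed.
    have -> : c = (c + c0) + c0 by rewrite -addrA rv_addxx addr0.
    exact: closed.
  rewrite /s -sumrN; apply: eq_bigr => c _.
  by rewrite dotF2D sg2D H1 /sg2 /= mulrN1.
move=> Hs; lra.
Qed.

Definition vf j (f : {ffun 'I_j -> 'I_n}) : 'rV['F_2]_n :=
  \row_i \sum_(l < j) ((f l == i)%:R : 'F_2).

Lemma dot_vf j f c : dotF2 (@vf j f) c = \sum_(l < j) c 0 (f l).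
Proof.
rewrite /dotF2; under eq_bigr do rewrite mxE mulr_suml.
rewrite exchange_big; apply: eq_bigr => l _.
rewrite (bigD1 (f l)) //= eqxx mul1r big1 ?addr0 // => i Hi.
by rewrite eq_sym (negbTE Hi) mul0r.
Qed.

Lemma S_pow j c : Sv c ^+ j = \sum_(f : {ffun 'I_j -> 'I_n}) sg2 (dotF2 (vf f) c).
Proof.
rewrite -[j in LHS]card_ord -prodr_const /Sv bigA_distr_bigA.
apply: eq_bigr => f _; rewrite dot_vf (big_morph sg2 sg2D sg2_0).
by [].
Qed.

Lemma wt_vf j f : (wt (@vf j f) <= j)%N.
Proof.
rewrite /wt; apply: leq_trans (_ : #|[set f l | l in 'I_j]| <= j)%N.
  apply: subset_leq_card; apply/subsetP => i; rewrite inE mxE.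
  apply: contraR => Hi; rewrite big1 // => l _.
  case: eqP => // E; case/negP: Hi; rewrite -E; exact: imset_f.
by apply: leq_trans (leq_imset_card _ _) _; rewrite card_ord.
Qed.


Lemma moment (P : {set 'rV['F_2]_n})
  (closed : forall c c', c \in P -> c' \in P -> c + c' \in P) j
  (Hd : forall x, x \in dualS P -> x != 0 -> (j < wt x)%N) :
  \sum_(c in P) Sv c ^+ j =
    (#|P|)%:R * (#|[set f : {ffun 'I_j -> 'I_n} | vf f == 0]|)%:R.
Proof.
under eq_bigr do rewrite S_pow.
rewrite exchange_big /=.
under eq_bigr do rewrite char_sum //.
transitivity (\sum_(f : {ffun 'I_j -> 'I_n}) if vf f == 0 then (#|P|)%:R else (0:rat)).
  apply: eq_bigr => f _; congr (if _ then _ else _).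
  apply/idP/eqP => [Hf|->].
    apply/eqP; apply: contraT => Hn; have := Hd _ Hf Hn.
    by rewrite ltnNge wt_vf.
  rewrite inE; apply/forallP => c; apply/implyP => _.
  by rewrite /dotF2 big1 // => i _; rewrite mxE mul0r.
rewrite -big_mkcond /=.
rewrite (eq_bigl (fun f => f \in [set f | vf f == 0])) => [|f]; last by rewrite inE.
by rewrite sumr_const mulr_natr.
Qed.

Lemma dualS_T x : x \in dualS setT -> x = 0.
Proof.
rewrite inE => /forallP H; apply/rowP => i; rewrite mxE.
have := H (delta_mx 0 i); rewrite inE /= /dotF2 => /eqP <-.
rewrite (bigD1 i) //= !mxE !eqxx mulr1 big1 ?addr0 // => k Hk.
by rewrite !mxE (negbTE Hk) andbF mulr0.
Qed.

Lemma moment_full j :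
  \sum_(x : 'rV['F_2]_n) Sv x ^+ j =
    (2 ^ n)%:R * (#|[set f : {ffun 'I_j -> 'I_n} | vf f == 0]|)%:R.
Proof.
have := @moment setT (fun _ _ _ _ => in_setT _) j.
rewrite cardsT card_mx card_Fp // mul1n => <-; last first.
  by move=> x /dualS_T ->; rewrite eqxx.
by apply: eq_bigl => x; rewrite in_setT.
Qed.


Definition Sk k x : rat := \sum_(i < n | (i < k)%N) sg2 (x 0 i).

Lemma SkS k (Hk : (k < n)%N) x : Sk k.+1 x = Sk k x + sg2 (x 0 (Ordinal Hk)).
Proof.
rewrite /Sk (bigD1 (Ordinal Hk)) //= addrC; congr (_ + _).
by apply: eq_bigl => i; rewrite ltnS [(i < k)%N]ltn_neqAle andbC.
Qed.

Lemma Sk0 x : Sk 0 x = 0.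
Proof. by rewrite /Sk big_pred0. Qed.

Lemma Skn x : Sk n x = Sv x.
Proof. by rewrite /Sk /Sv; apply: eq_bigl => i; rewrite ltn_ord. Qed.

Lemma flip k (Hk : (k < n)%N) (F : rat -> rat -> rat) :
  \sum_x F (Sk k x) (sg2 (x 0 (Ordinal Hk))) =
  \sum_x F (Sk k x) (- sg2 (x 0 (Ordinal Hk))).
Proof.
pose e : 'rV['F_2]_n := delta_mx 0 (Ordinal Hk).
rewrite (reindex_inj (addIr e)) /=; apply: eq_bigr => x _; congr F.
  apply: eq_bigr => i Hi; rewrite !mxE eqxx /=.
  have -> : (i == Ordinal Hk) = false.
    by apply/eqP => E; move: Hi; rewrite E /= ltnn.
  by rewrite addr0.
by rewrite !mxE !eqxx /= sg2_1.
Qed.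

Lemma step k (Hk : (k < n)%N) (q : rat -> rat) j :
  (forall S s : rat, s ^+ 2 = 1 -> (S + s) ^+ j + (S - s) ^+ j = 2%:R * q S) ->
  \sum_x Sk k.+1 x ^+ j = \sum_x q (Sk k x).
Proof.
move=> Hq; under eq_bigr do rewrite SkS.
set L := \sum_x _.
have : L + L = \sum_x 2%:R * q (Sk k x).
  rewrite {2}/L (flip Hk (fun S s => (S + s) ^+ j)) -big_split.
  by apply: eq_bigr => x _; rewrite -(Hq _ (sg2 (x 0 (Ordinal Hk))) (sg2_sq _)).
rewrite -mulr_sumr => HL; lra.
Qed.

Lemma H0 k : \sum_(x : 'rV['F_2]_n) Sk k x ^+ 0 = (2 ^ n)%:R.
Proof. by under eq_bigr do rewrite expr0; rewrite sumr_const card_mx card_Fp // mul1n. Qed.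

Lemma H_all k : (k <= n)%N ->
  let kq : rat := k%:R in
  [/\ \sum_x Sk k x ^+ 2 = (2 ^ n)%:R * kq,
      \sum_x Sk k x ^+ 4 = (2 ^ n)%:R * (3%:R * kq ^+ 2 - 2%:R * kq) &
      \sum_x Sk k x ^+ 6 = (2 ^ n)%:R * (15%:R * kq ^+ 3 - 30%:R * kq ^+ 2 + 16%:R * kq)].
Proof.
elim: k => [|k IH] Hk /=.
  by split; under eq_bigr do rewrite Sk0 expr0n /=; rewrite big1 //; ring.
have [I2 I4 I6] := IH (ltnW Hk).
have E0 := H0 k.
rewrite !(@step k Hk (fun S => S ^+ 2 + 1) 2) ?(@step k Hk (fun S => S ^+ 4 + 6%:R * S ^+ 2 + 1) 4)
  ?(@step k Hk (fun S => S ^+ 6 + 15%:R * S ^+ 4 + 15%:R * S ^+ 2 + 1) 6); last first.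
all: try (move=> S s Hs).
all: try by rewrite (_ : (S + s) ^+ 6 + (S - s) ^+ 6 = 2%:R * (S ^+ 6 + 15%:R * S ^+ 4 * s ^+ 2 + 15%:R * S ^+ 2 * (s ^+ 2) ^+ 2 + (s ^+ 2) ^+ 3)); [rewrite Hs; ring | ring].
all: try by rewrite (_ : (S + s) ^+ 4 + (S - s) ^+ 4 = 2%:R * (S ^+ 4 + 6%:R * S ^+ 2 * s ^+ 2 + (s ^+ 2) ^+ 2)); [rewrite Hs; ring | ring].
all: try by rewrite (_ : (S + s) ^+ 2 + (S - s) ^+ 2 = 2%:R * (S ^+ 2 + s ^+ 2)); [rewrite Hs; ring | ring].
rewrite /= in E0.
rewrite !big_split /= -!mulr_sumr !sumr_const card_mx card_Fp // mul1n.
rewrite I2 I4 I6 -addn1 natrD.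
split; ring.
Qed.


Lemma moment_C (P : {set 'rV['F_2]_n})
  (closed : forall c c', c \in P -> c' \in P -> c + c' \in P) j
  (Hd : forall x, x \in dualS P -> x != 0 -> (j < wt x)%N) :
  \sum_(c in P) Sv c ^+ j = (#|P|)%:R * (\sum_x Sv x ^+ j) / (2 ^ n)%:R.
Proof.
rewrite moment_full (moment closed Hd).
have H2 : (2 ^ n)%:R != 0 :> rat by rewrite pnatr_eq0 -lt0n expn_gt0.
by field.
Qed.

Lemma full_moments :
  let nq : rat := n%:R in
  [/\ \sum_x Sv x ^+ 2 = (2 ^ n)%:R * nq,
      \sum_x Sv x ^+ 4 = (2 ^ n)%:R * (3%:R * nq ^+ 2 - 2%:R * nq) &
      \sum_x Sv x ^+ 6 = (2 ^ n)%:R * (15%:R * nq ^+ 3 - 30%:R * nq ^+ 2 + 16%:R * nq)].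
Proof.
have [E2 E4 E6] := H_all (leqnn n).
by split; [rewrite -E2 | rewrite -E4 | rewrite -E6]; apply: eq_bigr => x _; rewrite Skn.
Qed.

Lemma wt0 x : wt x = 0%N -> x = 0.
Proof.
move=> /cards0_eq E; apply/rowP => i; rewrite mxE.
have : i \notin (set0 : {set 'I_n}) by rewrite inE.
by rewrite -E inE negbK => /eqP.
Qed.

Lemma wt_0 : wt (0 : 'rV['F_2]_n) = 0%N.
Proof.
by apply/eqP; rewrite cards_eq0; apply/eqP/setP => i; rewrite !inE mxE eqxx.
Qed.

Lemma wt_compl x : wt (x + ones n) = (n - wt x)%N.
Proof.
rewrite /wt [in LHS]cardsCs card_ord.
have -> : ~: [set i | (x + ones n) 0 i != 0] = [set i | x 0 i != 0].
  apply/setP => i; rewrite !inE !mxE.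
  by case: (F2_cases (x 0 i)) => ->.
by [].
Qed.

End Fixn.

Lemma decomp (T : finType) (P : {set T}) (wf : T -> nat) (g : nat -> rat)
  u0 u1 u2 u3 u4 :
  u0 <> u1 -> u0 <> u2 -> u0 <> u3 -> u0 <> u4 -> u1 <> u2 -> u1 <> u3 ->
  u1 <> u4 -> u2 <> u3 -> u2 <> u4 -> u3 <> u4 ->
  (forall c, c \in P -> wf c = u0 \/ wf c = u1 \/ wf c = u2 \/ wf c = u3 \/ wf c = u4) ->
  \sum_(c in P) g (wf c) =
    (\sum_(c in P) ((wf c == u0)%:R : rat)) * g u0 +
    (\sum_(c in P) ((wf c == u1)%:R : rat)) * g u1 +
    (\sum_(c in P) ((wf c == u2)%:R : rat)) * g u2 +
    (\sum_(c in P) ((wf c == u3)%:R : rat)) * g u3 +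
    (\sum_(c in P) ((wf c == u4)%:R : rat)) * g u4.
Proof.
move=> ? ? ? ? ? ? ? ? ? ? Hc.
rewrite !mulr_suml -!big_split; apply: eq_bigr => c /Hc [->|[->|[->|[->|->]]]]; rewrite !eqxx;
  repeat (case: eqP => [?|_]; first congruence); rewrite /=; ring.
Qed.

Lemma two_bound (T : finType) (A : {set T}) y z :
  (forall u, u \in A -> u = y \/ u = z) -> (#|A| <= 2)%N.
Proof.
move=> H; apply: leq_trans (subset_leq_card (_ : A \subset [set y; z])) _.
  by apply/subsetP => u /H [] ->; rewrite !inE eqxx ?orbT.
by rewrite cards2; case: (y != z).
Qed.

Lemma three (T : finType) (A : {set T}) a b c : #|A| = 3%N ->
  (forall u, u \in A -> u = a \/ u = b \/ u = c) ->
  [/\ a \in A, b \in A, c \in A & a != b].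
Proof.
move=> HA H.
have F : forall y z, (forall u, u \in A -> u = y \/ u = z) -> False.
  by move=> y z /two_bound; rewrite HA.
split.
- apply: contraT => Ha; exfalso; apply: (F b c) => u Hu.
  case: (H u Hu) => [E|//]; by move: Hu; rewrite E (negbTE Ha).
- apply: contraT => Hb; exfalso; apply: (F a c) => u Hu.
  case: (H u Hu) => [E|[E|E]]; [by left| |by right].
  by move: Hu; rewrite E (negbTE Hb).
- apply: contraT => Hc; exfalso; apply: (F a b) => u Hu.
  case: (H u Hu) => [E|[E|E]]; [by left|by right|].
  by move: Hu; rewrite E (negbTE Hc).
apply/negP => /eqP E; exfalso; apply: (F b c) => u Hu.
by case: (H u Hu) => [E'|//]; left; rewrite E' E.
Qed.

Lemma lin_comb (z l1 r1 l2 r2 c1 c2 : rat) : l1 = r1 -> l2 = r2 ->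
  z = c1 * (l1 - r1) + c2 * (l2 - r2) -> z = 0.
Proof. by move=> -> -> ->; rewrite !subrr !mulr0 addr0. Qed.

Lemma by_eq (l r l' r' : rat) : l' = r' -> l - r = l' - r' -> l = r.
Proof. by move=> -> /eqP; rewrite subrr subr_eq0 => /eqP. Qed.

Lemma by_eq3 (l r l1 r1 l2 r2 l3 r3 c1 c2 c3 : rat) :
  l1 = r1 -> l2 = r2 -> l3 = r3 ->
  l - r = c1 * (l1 - r1) + c2 * (l2 - r2) + c3 * (l3 - r3) -> l = r.
Proof.
move=> -> -> -> /eqP; rewrite !subrr !mulr0 !addr0 subr_eq0 => /eqP //.
Qed.

Lemma nq_facts (n : nat) : (4 <= n)%N ->
  [/\ 4%:R <= (n%:R : rat), (n%:R : rat) != 0 & 0 < ((n%:R : rat) - 1) * (n%:R - 2%:R)].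
Proof.
move=> H; have H4 : 4%:R <= (n%:R : rat) by rewrite ler_nat.
split => //; first by rewrite pnatr_eq0 -lt0n (leq_trans _ H).
by apply: mulr_gt0; lra.
Qed.

Lemma pos_contra (a b : rat) : 0 <= a -> 0 <= b -> 2%:R + 2%:R * a + b = 0 -> False.
Proof. move=> *; lra. Qed.

End Aux.
Import Aux.

Theorem lemma5p1 (n d dp t : nat) (C : {vspace 'rV['F_2]_n}) :
  min_dist C d ->
  ones n \in C ->
  dual_min_dist C dp ->
  (0 < t)%N ->
  (dp - t = 3)%N ->
  num_low_weights C t = 3%N ->
  ~~ odd n ->
  (forall u : nat, (0 < u)%N -> has_weight C u = (u \in [:: d; n./2; n - d; n]%N)) ->
  let nq : rat := n%:R in
  let dq : rat := d%:R in
  [/\ ((4 <= dp)%N -> (2 <= \dim C <= n.-1)%N ->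
        is_posint (nq * (2%:R ^+ (\dim C).-1 - nq) / (nq - 2%:R * dq) ^+ 2)),
      ((6 <= dp)%N ->
        is_posint (- (nq ^+ 2 * (nq - 1) * (nq - 2%:R)) /
           ((nq - 2%:R * dq) ^+ 2 *
            (nq ^+ 2 - (4%:R * dq + 3%:R) * nq + 4%:R * dq ^+ 2 + 2%:R)))) &
      ((8 <= dp)%N ->
        exists m : int,
          let mq : rat := m%:~R in
          [/\ nq = (mq ^+ 2 + 8%:R) / 3%:R,
              nq ^+ 2 * (nq ^+ 2 - 3%:R * nq + 2%:R) / (6%:R * (3%:R * nq - 8%:R))
                = (mq ^+ 2 + 2%:R) * (mq ^+ 2 + 5%:R) * (mq ^+ 2 + 8%:R) ^+ 2
                  / (486%:R * mq ^+ 2),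
              is_posint (nq ^+ 2 * (nq ^+ 2 - 3%:R * nq + 2%:R) / (6%:R * (3%:R * nq - 8%:R))) &
              is_posint (2%:R * (nq ^+ 4 - 7%:R * nq ^+ 3 + 23%:R * nq ^+ 2 - 41%:R * nq + 24%:R)
                         / (3%:R * (3%:R * nq - 8%:R)))])].
Proof.
move=> Hmd Hones Hdmd Ht Hdpt Hnl Hev Hw nq dq.
have Hdp : (3 < dp)%N by lia.
set h := n./2.
have Hn2 : n = (h + h)%N.
  by rewrite addnn /h; move: (odd_double_half n); rewrite (negbTE Hev) add0n.
have Hdn : (d <= n)%N by case: Hmd => [[c _ <-] _]; apply: wt_le.
move: Hnl; rewrite /num_low_weights; set Sset := [set u : 'I_n.+1 | _] => Hnl.
have Hsub : forall u, u \in Sset -> u = inord d \/ u = inord h \/ u = inord (n - d).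
  move=> u; rewrite inE => /andP [/andP [Hu0 Hut] Hhw].
  have Hun := ltn_ord u.
  move: Hhw; rewrite Hw // !inE => /or4P [] /eqP E.
  - by left; apply: val_inj; rewrite /= inordK // ltnS.
  - by right; left; apply: val_inj; rewrite /= inordK // ltnS /h; lia.
  - by right; right; apply: val_inj; rewrite /= inordK // ltnS; lia.
  - lia.
have [Hd_in Hh_in Hnd_in Hdh] := three Hnl Hsub.
move: Hd_in Hh_in Hnd_in; rewrite !inE !inordK ?ltnS ?leq_subr //; last by rewrite /h; lia.
move=> /andP [/andP [Hd0 Hdt] _] /andP [/andP [Hh0 _] Hhw] /andP [/andP [Hnd0 _] Hndw].
have {}Hdh : d <> h.
  by move=> E; move/eqP: Hdh; apply; rewrite E.
have Hdd : (d <= n - d)%N.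
  case/existsP: Hndw => c /andP [Hc /eqP Hwc].
  case: Hmd => _ /(_ c Hc); rewrite Hwc; apply.
  by apply/eqP => E; move: Hwc; rewrite E wt_0; lia.
have Hdlt : (d + d < n)%N by lia.
have Hcls : forall c, c \in C ->
    wt c = 0%N \/ wt c = d \/ wt c = h \/ wt c = (n - d)%N \/ wt c = n.
  move=> c Hc; case: (posnP (wt c)) => [->|Hp]; [by left|right].
  have : has_weight C (wt c) by apply/existsP; exists c; rewrite Hc eqxx.
  by rewrite Hw // !inE => /or4P [] /eqP; tauto.
pose P := [set c | c \in C].
have Pclosed : forall c c', c \in P -> c' \in P -> c + c' \in P.
  by move=> c c'; rewrite !inE; apply: memvD.
have HP : forall j, (j < dp)%N ->
    \sum_(c in P) Sv c ^+ j = (#|P|)%:R * (\sum_(x : 'rV['F_2]_n) Sv x ^+ j) / (2 ^ n)%:R.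
  move=> j Hj; apply: (moment_C Pclosed) => x Hx Hx0.
  apply: leq_trans Hj _; case: Hdmd => _; apply => //.
  move: Hx; rewrite !inE => /forallP H; apply/forallP => c.
  by have := H c; rewrite inE.
pose cnt u := \sum_(c in P) ((wt c == u)%:R : rat).
have Hdec : forall g : nat -> rat, \sum_(c in P) g (wt c) =
    cnt 0%N * g 0%N + cnt d * g d + cnt h * g h + cnt (n - d)%N * g (n - d)%N + cnt n * g n.
  move=> g; apply: decomp; rewrite /h; try lia.
  by move=> c; rewrite inE; apply: Hcls.
have C0 : cnt 0%N = 1.
  rewrite /cnt (bigD1 0) ?inE ?mem0v //= wt_0 eqxx big1 ?addr0 //.
  move=> c /andP [_ Hc]; case: eqP => // /wt0 E; by move: Hc; rewrite E eqxx.
have Csym : forall u, (u <= n)%N -> cnt u = cnt (n - u)%N.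
  move=> u Hu; rewrite /cnt (reindex_inj (addIr (ones n))) /=.
  rewrite (eq_bigl (fun c => c \in P)); last first.
    move=> c; rewrite !inE; apply/idP/idP => Hc; last exact: memvD.
    have -> : c = (c + ones n) + ones n by rewrite -addrA rv_addxx addr0.
    exact: memvD.
  apply: eq_bigr => c _; rewrite wt_compl; have := wt_le c.
  move=> Hc; rewrite (_ : (n - wt c == u)%N = (wt c == n - u)%N) //.
  by apply/eqP/eqP; lia.
have Cn : cnt n = 1 by rewrite (Csym n) // subnn C0.
have Cnd : cnt (n - d)%N = cnt d by rewrite (Csym d Hdn).
pose an := (\sum_(c in P) (wt c == d))%N.
pose bn := (\sum_(c in P) (wt c == h))%N.
have Ca : cnt d = an%:R by rewrite natr_sum.
have Cb : cnt h = bn%:R by rewrite natr_sum.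
have an_pos : (0 < an)%N.
  case: Hmd => [[c /andP [Hc _] Hwc] _].
  by rewrite /an (bigD1 c) ?inE //= Hwc eqxx.
have bn_pos : (0 < bn)%N.
  case/existsP: Hhw => c /andP [Hc /eqP Hwc].
  by rewrite /bn (bigD1 c) ?inE //= Hwc eqxx.
set a : rat := an%:R.
set b : rat := bn%:R.
set N : rat := (#|P|)%:R.
have HN : N = 2%:R + 2%:R * a + b.
  have := Hdec (fun _ => 1); rewrite !mulr1 C0 Cn Cnd Ca Cb sumr_const /N => ->.
  ring.
have H2n : (2 ^ n)%:R != 0 :> rat by rewrite pnatr_eq0 -lt0n expn_gt0.
have Hh : nq - 2%:R * h%:R = 0 by rewrite /nq Hn2 natrD; ring.
have Hndq : (n - d)%N%:R = nq - dq by rewrite natrB.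
have Mj : forall j, (j < dp)%N -> forall X, \sum_(x : 'rV['F_2]_n) Sv x ^+ j = (2 ^ n)%:R * X ->
    (nq - 2%:R * 0%N%:R) ^+ j + a * (nq - 2%:R * dq) ^+ j + b * 0 ^+ j +
    a * (nq - 2%:R * (nq - dq)) ^+ j + (nq - 2%:R * nq) ^+ j = N * X.
  move=> j Hj X HX.
  have := HP j Hj; rewrite HX.
  rewrite (eq_bigr (fun c => (fun u : nat => (nq - 2%:R * u%:R) ^+ j) (wt c))); last first.
    by move=> c _; rewrite S_wt.
  rewrite (Hdec (fun u => (nq - 2%:R * u%:R) ^+ j)) C0 Cn Cnd Ca Cb /= Hh Hndq !mul1r => ->.
  by field.
have [FE2 FE4 FE6] := full_moments n.
have Hwn : nq - 2%:R * dq = (n - (d + d))%N%:R by rewrite natrB ?natrD; [rewrite /nq /dq; ring|lia].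
have Hw0 : nq - 2%:R * dq != 0 by rewrite Hwn pnatr_eq0 -lt0n subn_gt0.
have HX0 : (nq - 2%:R * dq) ^+ 2 != 0 by rewrite expf_neq0.
have Hn4 : (4 <= n)%N by rewrite /h in Hdh Hn2; lia.
have [Hnq Hnq0 HPpos] := nq_facts Hn4.
have Ha0 : 0 <= a by rewrite /a ler0n.
have Hb0 : 0 <= b by rewrite /b ler0n.
set X := (nq - 2%:R * dq) ^+ 2.
have F2 : 2%:R * nq ^+ 2 + 2%:R * a * X = N * nq.
  have H := Mj 2%N (ltnW Hdp) _ FE2.
  apply: (by_eq3 H (erefl (0:rat)) (erefl (0:rat)) (c1 := 1) (c2 := 0) (c3 := 0)).
  rewrite /X /nq; ring.
have F4 : (5 < dp)%N -> 2%:R * nq ^+ 4 + 2%:R * a * X ^+ 2 = N * (3%:R * nq ^+ 2 - 2%:R * nq).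
  move=> H6; have H := Mj 4%N (ltnW H6) _ FE4.
  apply: (by_eq3 H (erefl (0:rat)) (erefl (0:rat)) (c1 := 1) (c2 := 0) (c3 := 0)).
  rewrite /X /nq; ring.
have Hy0 : forall D : rat, a * X * D = - (nq ^+ 2 * (nq - 1) * (nq - 2%:R)) -> D != 0.
  move=> D HD; apply/eqP => E; move: HD; rewrite E mulr0 => /eqP.
  rewrite eq_sym oppr_eq0 -mulrA mulf_eq0 expf_eq0 (negbTE Hnq0) /= => /eqP HP0.
  by move: HPpos; rewrite HP0 ltxx.
split.
- move=> _ /andP [Hk2 _]; exists an; split => //.
  have HNk : N = 2%:R * 2%:R ^+ (\dim C).-1.
    rewrite /N /P cardsE card_vspace card_Fp // natrX -exprS prednK //.
    by apply: leq_trans Hk2.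
  apply/esym.
  have HaX : nq * (2%:R ^+ (\dim C).-1 - nq) = a * X.
    apply: (by_eq3 F2 (erefl (0:rat)) (erefl (0:rat)) (c1 := - 2%:R^-1) (c2 := 0) (c3 := 0)).
    by rewrite HNk; field.
  by rewrite HaX mulfK.
- move=> H6; exists an; split => //.
  have key : a * X * (X - 3%:R * nq + 2%:R) = - (nq ^+ 2 * (nq - 1) * (nq - 2%:R)).
    apply: (by_eq3 (F4 H6) F2 (erefl (0:rat)) (c1 := 2%:R^-1) (c2 := - (3%:R * nq - 2%:R) / 2%:R) (c3 := 0)).
    by field.
  rewrite (_ : nq ^+ 2 - (4%:R * dq + 3%:R) * nq + 4%:R * dq ^+ 2 + 2%:R = X - 3%:R * nq + 2%:R); last by rewrite /X; ring.
  by rewrite -key -mulrA mulfK // mulf_neq0 // Hy0.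
move=> H8.
have F4' := F4 (leq_trans (isT : (6 <= 8)%N) H8).
have F6 : 2%:R * nq ^+ 6 + 2%:R * a * X ^+ 3 = N * (15%:R * nq ^+ 3 - 30%:R * nq ^+ 2 + 16%:R * nq).
  have H := Mj 6%N (ltnW H8) _ FE6.
  apply: (by_eq3 H (erefl (0:rat)) (erefl (0:rat)) (c1 := 1) (c2 := 0) (c3 := 0)).
  rewrite /X /nq; ring.
have G2 : nq * ((N - 2%:R * nq) * (X - 3%:R * nq + 2%:R) + 2%:R * nq * ((nq - 1) * (nq - 2%:R))) = 0.
  apply: (by_eq3 F4' F2 (erefl (0:rat)) (c1 := 1) (c2 := - X) (c3 := 0)).
  ring.
have {G2} G2 : (N - 2%:R * nq) * (X - 3%:R * nq + 2%:R) + 2%:R * nq * ((nq - 1) * (nq - 2%:R)) = 0.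
  by move/eqP: G2; rewrite mulf_eq0 (negbTE Hnq0) /= => /eqP.
have G3 : nq * ((N - 2%:R * nq) * (X ^+ 2 - (15%:R * nq ^+ 2 - 30%:R * nq + 16%:R)) +
    2%:R * nq ^+ 5 - 2%:R * nq * (15%:R * nq ^+ 2 - 30%:R * nq + 16%:R)) = 0.
  apply: (by_eq3 F6 F2 (erefl (0:rat)) (c1 := 1) (c2 := - X ^+ 2) (c3 := 0)).
  ring.
have {G3} G3 : (N - 2%:R * nq) * (X ^+ 2 - (15%:R * nq ^+ 2 - 30%:R * nq + 16%:R)) +
    2%:R * nq ^+ 5 - 2%:R * nq * (15%:R * nq ^+ 2 - 30%:R * nq + 16%:R) = 0.
  by move/eqP: G3; rewrite mulf_eq0 (negbTE Hnq0) /= => /eqP.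
have G4 : (2%:R * nq * ((nq - 1) * (nq - 2%:R))) *
    ((X - 3%:R * nq + 2%:R + 6%:R) * ((X - 3%:R * nq + 2%:R) - (nq - 1) * (nq - 2%:R))) = 0.
  apply: (by_eq3 G3 G2 (erefl (0:rat)) (c1 := - (X - 3%:R * nq + 2%:R))
     (c2 := X ^+ 2 - (15%:R * nq ^+ 2 - 30%:R * nq + 16%:R)) (c3 := 0)).
  ring.
have HPn : 2%:R * nq * ((nq - 1) * (nq - 2%:R)) != 0.
  apply: mulf_neq0; last exact: lt0r_neq0.
  by apply: mulf_neq0; rewrite // pnatr_eq0.
move/eqP: G4; rewrite mulf_eq0 (negbTE HPn) /= mulf_eq0 => /orP [/eqP Hy6 | /eqP HyP]; last first.
  exfalso; move: G2; rewrite (_ : X - 3%:R * nq + 2%:R = (nq - 1) * (nq - 2%:R)); last first.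
    by apply/eqP; rewrite -subr_eq0 HyP.
  move=> /eqP; rewrite (_ : forall u v : rat, u * v + 2%:R * nq * v = (u + 2%:R * nq) * v); last by move=> u v; ring.
  rewrite mulf_eq0 (negbTE (lt0r_neq0 HPpos)) orbF subrK HN => /eqP E.
  exact: (pos_contra Ha0 Hb0 E).
have Hx : X = 3%:R * nq - 8%:R.
  apply: (by_eq3 Hy6 (erefl (0:rat)) (erefl (0:rat)) (c1 := 1) (c2 := 0) (c3 := 0)); ring.
have HMv : N = 2%:R * nq + nq * ((nq - 1) * (nq - 2%:R)) / 3%:R.
  apply: (by_eq3 G2 Hx (erefl (0:rat)) (c1 := - 6%:R^-1) (c2 := (N - 2%:R * nq) / 6%:R) (c3 := 0)).
  by field.
have H38 : 6%:R * (3%:R * nq - 8%:R) != 0 by rewrite mulf_neq0 ?pnatr_eq0 // -Hx.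
have Ha' : a * (6%:R * (3%:R * nq - 8%:R)) = nq ^+ 2 * (nq ^+ 2 - 3%:R * nq + 2%:R).
  apply: (by_eq3 F2 HMv Hx (c1 := 3%:R) (c2 := 3%:R * nq) (c3 := - 6%:R * a)).
  by field.
have Hav : a = nq ^+ 2 * (nq ^+ 2 - 3%:R * nq + 2%:R) / (6%:R * (3%:R * nq - 8%:R)).
  by rewrite -Ha' mulfK.
have Hbv : b = N - 2%:R - 2%:R * a by rewrite HN; ring.
have Hmq : ((n - (d + d))%N%:Z%:~R : rat) = nq - 2%:R * dq by rewrite Hwn.
exists ((n - (d + d))%N%:Z).
have H38' : 3%:R * nq - 8%:R != 0 by rewrite -Hx.
have HmX : ((n - (d + d))%N%:Z%:~R : rat) ^+ 2 = 3%:R * nq - 8%:R by rewrite Hmq -Hx.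
rewrite HmX; split.
- by field.
- by field.
- by exists an; split => //; exact: (esym Hav).
exists bn; split => //.
have Hb2 : b = 2%:R * (nq ^+ 4 - 7%:R * nq ^+ 3 + 23%:R * nq ^+ 2 - 41%:R * nq + 24%:R)
    / (3%:R * (3%:R * nq - 8%:R)).
  by rewrite Hbv HMv Hav; field.
exact: (esym Hb2).
Qed.
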